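(* Let $\mu$ be a doubling measure on $\mathbb Z$ and set $a_j=\mu(j)$. If there exist integers $j_1<j_2<j_3$ with $a_{j_2}<\min\{a_{j_1},a_{j_3}\}$, then $C^0_\mu>3$.
   Context: $\mathbb Z$ is the infinite path graph with edges $\{j,j+1\}$ and distance $|i-j|$. A measure is a weight function $\mu:\mathbb Z\to(0,\infty)$, $\mu(A)=\sum_{v\in A}\mu(v)$; $B(x,r)=\{y:|x-y|\le r\}$; $\mu$ is doubling if $\sup\{\mu(B(x,2k+1))/\mu(B(x,k)):x\in\mathbb Z,k\ge0\}<\infty$; $C^0_\mu=\sup_{x\in\mathbb Z}\mu(B(x,1))/\mu(x)$. *)

(* Defs.v *)
From HB Require Import structures.
From mathcomp Require Import all_boot all_order all_algebra.
From mathcomp Require Import all_classical all_reals ereal.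
Set Implicit Arguments. Unset Strict Implicit. Unset Printing Implicit Defensive.
Import Order.TTheory GRing.Theory Num.Theory.
Local Open Scope ring_scope.

Definition ball_measure (R : realType) (mu : int -> R) (x : int) (r : nat) : R :=
  \sum_(i < (2 * r).+1) mu (x - r%:Z + i%:Z).

Definition is_measure (R : realType) (mu : int -> R) : Prop := forall v, 0 < mu v.

Definition doubling (R : realType) (mu : int -> R) : Prop :=
  (ereal_sup [set e : \bar R | exists (x : int) (k : nat),
     e = (ball_measure mu x (2 * k + 1) / ball_measure mu x k)%:E] < +oo)%E.

Definition C0 (R : realType) (mu : int -> R) : \bar R :=
  ereal_sup [set e : \bar R | exists x : int, e = (ball_measure mu x 1 / mu x)%:E].

(* Main.v *)
Require Import Defs.
From HB Require Import structures.
From mathcomp Require Import all_boot all_order all_algebra.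
From mathcomp Require Import all_classical all_reals ereal.
From mathcomp Require Import lra ring.
Import Order.TTheory GRing.Theory Num.Theory.
Local Open Scope ring_scope.

Lemma concave_bound (R : realType) (g : nat -> R) :
  (forall k, g k + g k.+2 <= 2 * g k.+1) ->
  forall k, g k - g 0 <= k%:R * (g 1 - g 0).
Proof.
move=> H.
have Hd : forall k, g k.+1 - g k <= g 1 - g 0.
  elim=> [|k IH]; first by rewrite lexx.
  have := H k; lra.
elim=> [|k IH]; first by rewrite subrr mul0r.
have := Hd k; rewrite -natr1; lra.
Qed.

Lemma aux (R : realType) (a b c : R) : 0 < b - c -> 0 < a - c -> a + b <= 2 * c -> False.
Proof. move=> *; lra. Qed.

Theorem lemma4p4 (R : realType) (mu : int -> R) (hmu : is_measure mu)
  (hd : doubling mu) (j1 j2 j3 : int) :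
  j1 < j2 -> j2 < j3 -> mu j2 < Num.min (mu j1) (mu j3) ->
  (3%:E < C0 mu)%E.
Proof.
move=> h12 h23 hmin.
rewrite ltNge; apply/negP => hC.
have H : forall x, mu (x - 1) + mu (x + 1) <= 2 * mu x.
  move=> x.
  have : ((ball_measure mu x 1 / mu x)%:E <= C0 mu)%E.
    by apply: ereal_sup_ubound; exists x.
  move=> /le_trans /(_ hC); rewrite lee_fin ler_pdivrMr //.
  rewrite /ball_measure !big_ord_recl big_ord0 /=.
  have -> : x - 1%:Z + (@nat_of_ord 3 ord0)%:Z = x - 1 by rewrite /= addr0.
  have -> : x - 1%:Z + (@bump 0 (@nat_of_ord 2 ord0))%:Z = x by rewrite /bump /=; ring.
  have -> : x - 1%:Z + (@bump 0 (@bump 0 (@nat_of_ord 1 ord0)))%:Z = x + 1 by rewrite /bump /=; ring.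
  lra.
pose gp (k : nat) := mu (j2 + k%:Z).
pose gm (k : nat) := mu (j2 - k%:Z).
have Hp := @concave_bound R gp.
have Hm := @concave_bound R gm.
have Hp' : forall k, gp k + gp k.+2 <= 2 * gp k.+1.
  move=> k; have := H (j2 + k.+1%:Z); rewrite /gp.
  have -> : j2 + k.+1%:Z - 1 = j2 + k%:Z by rewrite -[k.+1]addn1 PoszD; ring.
  have -> : j2 + k.+1%:Z + 1 = j2 + k.+2%:Z by rewrite -[k.+2]addn2 PoszD; ring.
  by [].
have Hm' : forall k, gm k + gm k.+2 <= 2 * gm k.+1.
  move=> k; have := H (j2 - k.+1%:Z); rewrite /gm.
  have -> : j2 - k.+1%:Z - 1 = j2 - k.+2%:Z by rewrite -[k.+2]addn2 -[k.+1]addn1 !PoszD; ring.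
  have -> : j2 - k.+1%:Z + 1 = j2 - k%:Z by rewrite -[k.+1]addn1 PoszD; ring.
  lra.
have H0 := H j2.
move: (Hp Hp' `|j3 - j2|%N) (Hm Hm' `|j2 - j1|%N).
rewrite /gp /gm !addr0 ?subr0.
have e3 : j2 + `|j3 - j2|%N%:Z = j3 by rewrite gez0_abs ?subr_ge0 ?ltW //; ring.
have e1 : j2 - `|j2 - j1|%N%:Z = j1 by rewrite gez0_abs ?subr_ge0 ?ltW //; ring.
rewrite e3 e1.
have p3 : 0 < (`|j3 - j2|%N)%:R :> R by rewrite ltr0n absz_gt0 subr_eq0 gt_eqF.
have p1 : 0 < (`|j2 - j1|%N)%:R :> R by rewrite ltr0n absz_gt0 subr_eq0 gt_eqF.
move: hmin; rewrite lt_min => /andP[a1 a3].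
move: p3 p1; set n3 := _%:R; set n1 := _%:R => p3 p1 b3 b1.
have hp : 0 < mu (j2 + 1) - mu j2.
  rewrite -(pmulr_rgt0 _ p3); lra.
have hq : 0 < mu (j2 - 1) - mu j2.
  rewrite -(pmulr_rgt0 _ p1); lra.
have H1 : mu (j2 - 1) + mu (j2 + 1) <= 2 * mu j2 := H j2.
exact: (@aux _ _ _ _ hp hq H1).
Qed.
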